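(* Let $r_0,r_1,r_2\ge 1$ with $r_1<r_0$ and $r_1<r_2$, and let $L=\mathfrak{g}(r_0,r_1,r_2)$. Then $b(L)\le r_1(r_0-r_1)+r_1r_2=r_1(r_0+r_2-r_1)$.
   Context: All Lie algebras are over an algebraically closed field $\mathbf{k}$ of characteristic zero. $\mathcal{P}(r_0,r_1,r_2)$ is the poset on $\{b_1,\dots,b_{r_0},m_1,\dots,m_{r_1},t_1,\dots,t_{r_2}\}$ whose strict relations are exactly $b_i\prec m_j$, $m_j\prec t_k$ and $b_i\prec t_k$ for all $i,j,k$. $\mathfrak{g}(r_0,r_1,r_2)$ denotes the nilpotent Lie poset algebra $\mathfrak{g}^{\prec}(\mathcal{P}(r_0,r_1,r_2))$: the Lie algebra under the commutator bracket spanned by matrix units $E_{p,q}$ with $p\prec q$. The breadth of a Lie algebra $L$ is $b(L)=\max_{x\in L}\operatorname{rank}(\mathrm{ad}_x)$, where $\mathrm{ad}_x=[x,-]$. *)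

(* Defs.v *)
From HB Require Import structures.
From mathcomp Require Import all_boot all_order all_algebra.
Set Implicit Arguments. Unset Strict Implicit. Unset Printing Implicit Defensive.
Import GRing.Theory.
Local Open Scope ring_scope.

(* Level of an element of P(r0,r1,r2), elements indexed by 'I_(r0+r1+r2):
   indices 0..r0-1 are b_1..b_r0 (level 0), r0..r0+r1-1 are m_1..m_r1
   (level 1), the rest are t_1..t_r2 (level 2). *)
Definition plevel (r0 r1 : nat) (i : nat) : nat :=
  if (i < r0)%N then 0%N else if (i < r0 + r1)%N then 1%N else 2%N.

Definition pprec (r0 r1 r2 : nat) (i j : 'I_(r0 + r1 + r2)) : bool :=
  (plevel r0 r1 i < plevel r0 r1 j)%N.

(* The Lie poset algebra g(r0,r1,r2), as a row space (in the mxalgebra sense)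
   of vectorized n x n matrices: spanned by the matrix units E_{p,q}, p < q. *)
Definition gspace (F : fieldType) (r0 r1 r2 : nat) :
    'M[F]_((r0 + r1 + r2) * (r0 + r1 + r2)) :=
  (\sum_(p : 'I_(r0 + r1 + r2) | true)
     \sum_(q : 'I_(r0 + r1 + r2) | @pprec r0 r1 r2 p q)
        <<mxvec (delta_mx p q : 'M[F]_(r0 + r1 + r2))>>)%MS.

Definition adm (F : fieldType) (n : nat) (x : 'M[F]_n) (y : 'M[F]_n) : 'M[F]_n :=
  x *m y - y *m x.

(* rank of ad_x : L -> L, i.e. the dimension of ad_x(L) *)
Definition ad_rank (F : fieldType) (r0 r1 r2 : nat)
    (x : 'M[F]_(r0 + r1 + r2)) : nat :=
  \rank (gspace F r0 r1 r2 *m lin_mx (adm x)).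

Definition breadth_le (F : fieldType) (r0 r1 r2 k : nat) : Prop :=
  forall x : 'M[F]_(r0 + r1 + r2),
    (mxvec x <= gspace F r0 r1 r2)%MS -> (@ad_rank F r0 r1 r2 x <= k)%N.

(* Main.v *)
Require Import Defs.
From HB Require Import structures.
From mathcomp Require Import all_boot all_order all_algebra.
From mathcomp Require Import zify.
Set Implicit Arguments. Unset Strict Implicit. Unset Printing Implicit Defensive.
Import GRing.Theory.
Local Open Scope ring_scope.

Section Helpers.
Variable F : fieldType.

Fact adm_is_linear n (x : 'M[F]_n) : linear (adm x).
Proof.
move=> a A B; rewrite /adm mulmxDr mulmxDl -scalemxAr -scalemxAl.
by rewrite scalerBr opprD addrACA.
Qed.
HB.instance Definition _ n (x : 'M[F]_n) :=
  GRing.isSemilinear.Build F 'M[F]_n 'M[F]_n _ (adm x)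
    (GRing.semilinear_linear (adm_is_linear x)).

Definition outer n (r : 'rV[F]_n) (v : 'rV[F]_n) : 'rV[F]_(n * n) :=
  mxvec (v^T *m r).

Fact outer_is_linear n (r : 'rV[F]_n) : linear (outer r).
Proof.
move=> a A B; rewrite /outer linearD /= mulmxDl linearZ /= -scalemxAl.
by rewrite !linearD linearZ.
Qed.
HB.instance Definition _ n (r : 'rV[F]_n) :=
  GRing.isSemilinear.Build F 'rV[F]_n 'rV[F]_(n * n) _ (outer r)
    (GRing.semilinear_linear (outer_is_linear r)).

Lemma rank_sums (I : finType) (P : pred I) n (B : I -> 'M[F]_n) :
  (\rank (\sum_(i | P i) B i)%MS <= \sum_(i | P i) \rank (B i))%N.
Proof.
apply: (big_ind2 (fun A k => \rank A <= k)%N) => //.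
- by rewrite mxrank0.
- move=> A1 k1 A2 k2 h1 h2; apply: leq_trans (mxrank_adds_leqif _ _).1 _.
  exact: leq_add.
Qed.

Lemma rv_sub_D n (P : pred 'I_n) (v : 'rV[F]_n) :
  (forall i, ~~ P i -> v 0 i = 0) ->
  (v <= \sum_(i | P i) <<delta_mx 0 i : 'rV[F]_n>>)%MS.
Proof.
move=> hv; rewrite [v]row_sum_delta (bigID P) /=.
rewrite [X in _ + X]big1 ?addr0; last by move=> i /hv ->; rewrite scale0r.
apply: summx_sub => i Pi; apply: scalemx_sub.
by apply: (sumsmx_sup i) => //; rewrite genmxE.
Qed.

End Helpers.
Lemma sum_lvl r0 r1 r2 c :
  (\sum_(i < r0 + r1 + r2 | plevel r0 r1 i == c) 1)%N =
  (if c == 0 then r0 else if c == 1 then r1 else if c == 2 then r2 else 0)%N.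
Proof.
rewrite -(big_mkord (fun i => plevel r0 r1 i == c) (fun=> 1%N)) sum1_count.
rewrite /index_iota subn0 !iotaD !count_cat add0n.
have e1 : count (fun i => plevel r0 r1 i == c) (iota 0 r0) = (if c == 0 then r0 else 0)%N.
  rewrite (eq_in_count (a2 := fun=> c == 0)); first by case: (c == 0); rewrite ?count_predT ?count_pred0 ?size_iota.
  by move=> i; rewrite mem_iota /plevel => /andP[_ ->]; rewrite eq_sym.
have e2 : count (fun i => plevel r0 r1 i == c) (iota r0 r1) = (if c == 1 then r1 else 0)%N.
  rewrite (eq_in_count (a2 := fun=> c == 1)); first by case: (c == 1); rewrite ?count_predT ?count_pred0 ?size_iota.
  move=> i; rewrite mem_iota /plevel => /andP[h1 h2].
  by rewrite ltnNge h1 /= h2 eq_sym.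
have e3 : count (fun i => plevel r0 r1 i == c) (iota (r0 + r1) r2) = (if c == 2 then r2 else 0)%N.
  rewrite (eq_in_count (a2 := fun=> c == 2)); first by case: (c == 2); rewrite ?count_predT ?count_pred0 ?size_iota.
  move=> i; rewrite mem_iota /plevel => /andP[h1 h2].
  have -> : (i < r0)%N = false by lia.
  have -> : (i < r0 + r1)%N = false by lia.
  by rewrite eq_sym.
rewrite add0n e1 e2 e3.
by case: c {e1 e2 e3} => [|[|[|c]]] //=; rewrite ?addn0 ?add0n.
Qed.

Section Main.
Variables (F : fieldType) (r0 r1 r2 : nat).
Local Notation n := (r0 + r1 + r2)%N.
Local Notation lv i := (plevel r0 r1 (nat_of_ord i)).

Lemma lv_le2 (i : 'I_n) : (lv i <= 2)%N.
Proof. by rewrite /plevel; case: ifP => //; case: ifP. Qed.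

Lemma supp (x : 'M[F]_n) : (mxvec x <= gspace F r0 r1 r2)%MS ->
  forall i j, ~~ pprec i j -> x i j = 0.
Proof.
move=> hx i j hij.
set c := delta_mx (mxvec_index i j) 0 : 'cV[F]_(n * n).
have hg : (gspace F r0 r1 r2 <= kermx c)%MS.
  apply/sumsmx_subP => p _; apply/sumsmx_subP => q hpq; rewrite genmxE.
  apply/sub_kermxP; rewrite -colE; apply/matrixP => a b.
  rewrite !ord1 !mxE mxvecE mxE.
  case: (eqVneq p i) hpq => [->|] //=; case: (eqVneq q j) => [->|] //=.
  by rewrite (negbTE hij).
have /sub_kermxP h := submx_trans hx hg.
have := congr1 (fun M : 'M[F]_1 => M 0 0) h; rewrite /= -colE !mxE mxvecE => ->.

reflexivity. Qed.

Lemma main_bound (x : 'M[F]_n) : (mxvec x <= gspace F r0 r1 r2)%MS ->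
  exists a, [/\ (a <= r1)%N &
    (ad_rank x <= r1 * (r0 - a) + r2 * a)%N].
Proof.
move=> hx; have sx := supp hx.
pose At : 'M[F]_n := \matrix_(j, i) if lv j == 1%N then x i j else 0.
pose D0 := (\sum_(i : 'I_n | lv i == 0%N) <<delta_mx 0 i : 'rV[F]_n>>)%MS.
pose D1 := (\sum_(i : 'I_n | lv i == 1%N) <<delta_mx 0 i : 'rV[F]_n>>)%MS.
pose Dc := (D0 :\: At)%MS.
pose E (k : 'I_n) := lin1_mx (outer (delta_mx 0 k : 'rV[F]_n)).
pose Fm (j : 'I_n) := lin1_mx (outer (row j x)).
pose N1 := (\sum_(j : 'I_n | lv j == 1%N) <<Dc *m Fm j>>)%MS.
pose N2 := (\sum_(k : 'I_n | lv k == 2%N) <<At *m E k>>)%MS.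
have rkD (c : nat) : leq (\rank (\sum_(i : 'I_n | lv i == c) <<delta_mx 0 i : 'rV[F]_n>>)%MS)
     (\sum_(i : 'I_n | lv i == c) 1)%N.
  apply: leq_trans (rank_sums _ _) _; apply: leq_sum => i _.
  by rewrite mxrank_gen mxrank_delta.
have rD0 : (\rank D0 <= r0)%N by have := rkD 0%N; rewrite sum_lvl.
have rD1 : (\rank D1 <= r1)%N by have := rkD 1%N; rewrite sum_lvl.
have AtD0 : (At <= D0)%MS.
  apply/row_subP => j; apply: rv_sub_D => i hi; rewrite !mxE.
  case: ifP => // hj; apply: sx; rewrite /pprec (eqP hj).
  by move: hi; case: (plevel _ _ _).
have AtD1 : (At^T <= D1)%MS.
  apply/row_subP => i; apply: rv_sub_D => j hj; rewrite !mxE.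
  by rewrite (negbTE hj).
exists (\rank At); split.
  by rewrite -mxrank_tr; apply: leq_trans (mxrankS AtD1) rD1.
have rDc : \rank Dc = (\rank D0 - \rank At)%N.
  have := mxrank_cap_compl D0 At; move/capmx_idPr: (AtD0) => e.
  rewrite e.1 => <-; by rewrite addKn.
have csum (c m : nat) : (\sum_(j : 'I_n | lv j == c) m =
    m * \sum_(j : 'I_n | lv j == c) 1)%N.
  by rewrite big_distrr /=; apply: eq_bigr => j _; rewrite muln1.
have rN1 : (\rank N1 <= \rank Dc * r1)%N.
  apply: leq_trans (rank_sums _ _) _.
  apply: leq_trans (_ : _ <= \sum_(j : 'I_n | lv j == 1%N) \rank Dc)%N _.
    by apply: leq_sum => j _; rewrite mxrank_gen mxrankM_maxl.
  by rewrite csum sum_lvl.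
have rN2 : (\rank N2 <= \rank At * r2)%N.
  apply: leq_trans (rank_sums _ _) _.
  apply: leq_trans (_ : _ <= \sum_(j : 'I_n | lv j == 2%N) \rank At)%N _.
    by apply: leq_sum => j _; rewrite mxrank_gen mxrankM_maxl.
  by rewrite csum sum_lvl.
have sub_img : (gspace F r0 r1 r2 *m lin_mx (adm x) <= N1 + N2)%MS.
  rewrite /gspace sumsmxMr; apply/sumsmx_subP => p _.
  rewrite sumsmxMr; apply/sumsmx_subP => q hpq.
  rewrite (eqmxMr _ (genmxE _)) mul_vec_lin /adm linearB /=.
  apply: addmx_sub; last first.
    rewrite -scaleN1r; apply: scalemx_sub.
    have -> : delta_mx p q *m x = (delta_mx 0 p)^T *m row q x.
      by rewrite rowE trmx_delta mulmxA mul_delta_mx.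
    have hq2 := lv_le2 q.
    case: (eqVneq (lv q) 2%N) => hq.
      have -> : row q x = 0.
        apply/matrixP => i j; rewrite !mxE sx // /pprec hq.
        by have := lv_le2 j; case: (plevel _ _ _) => [|[|[|]]].
      by rewrite mulmx0 linear0 sub0mx.
    have hq1 : lv q = 1%N by move: hpq hq hq2; rewrite /pprec; lia.
    have hp0 : lv p = 0%N by move: hpq; rewrite /pprec hq1; lia.
    have hD : ((delta_mx 0 p : 'rV[F]_n) <= Dc + At)%MS.
      have h : ((delta_mx 0 p : 'rV[F]_n) <= D0)%MS.
        apply: rv_sub_D => i hi; rewrite mxE /=.
        by case: (eqVneq p i) => [ep|] //; move: hi; rewrite -ep hp0.
      apply: (submx_trans h).
      by rewrite -(addsmx_diff_cap_eq D0 At) addsmxS // capmxSr.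
    case/sub_addsmxP: hD => u ->.
    have -> : mxvec ((u.1 *m Dc + u.2 *m At)^T *m row q x) =
      outer (row q x) (u.1 *m Dc) + outer (row q x) (u.2 *m At).
      by rewrite -linearD.
    apply: addmx_sub.
      have -> : outer (row q x) (u.1 *m Dc) = u.1 *m (Dc *m Fm q).
        by rewrite mulmxA mul_rV_lin1.
      apply: submx_trans (addsmxSl N1 N2); apply: (sumsmx_sup q).
        by rewrite hq1.
      by rewrite genmxE submxMl.
    rewrite /outer {1}[row q x]row_sum_delta mulmx_sumr linear_sum /=.
    apply: summx_sub => k _.
    rewrite -scalemxAr linearZ /=; case: (eqVneq (lv k) 2%N) => hk.
      apply: scalemx_sub.
      have -> : mxvec ((u.2 *m At)^T *m delta_mx 0 k) = u.2 *m (At *m E k).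
        by rewrite mulmxA mul_rV_lin1.
      apply: submx_trans (addsmxSr N1 N2); apply: (sumsmx_sup k).
        by rewrite hk.
      by rewrite genmxE submxMl.
    rewrite mxE sx ?scale0r ?sub0mx // /pprec hq1.
    by move: hk (lv_le2 k); lia.
  have -> : x *m delta_mx p q = col p x *m delta_mx 0 q.
    by rewrite colE -mulmxA mul_delta_mx.
  case: (eqVneq (lv p) 0%N) => hp.
    have -> : col p x = 0.
      by apply/matrixP => i j; rewrite !mxE sx // /pprec hp ltn0.
    by rewrite mul0mx linear0 sub0mx.
  have hq2 := lv_le2 q.
  have hp1 : lv p = 1%N by move: hpq hp hq2; rewrite /pprec; lia.
  have hq : lv q = 2%N by move: hpq hq2; rewrite /pprec hp1; lia.
  have -> : col p x = (row p At)^T.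
    by apply/matrixP => i j; rewrite !mxE hp1 eqxx.
  have -> : mxvec ((row p At)^T *m delta_mx 0 q) = row p At *m E q.
    by rewrite mul_rV_lin1.
  apply: submx_trans (addsmxSr N1 N2); apply: (sumsmx_sup q).
    by rewrite hq.
  by rewrite genmxE submxMr // row_sub.
rewrite /ad_rank; apply: leq_trans (mxrankS sub_img) _.
apply: leq_trans (mxrank_adds_leqif _ _).1 _.
rewrite rDc in rN1; move: rN1 rN2 rD0; set a := \rank At; set d := \rank D0.
move=> h1 h2 h3; apply: leq_trans (leq_add h1 h2) _.
rewrite [(a * r2)%N]mulnC mulnC leq_add2r; apply: leq_mul => //.
exact: leq_sub2r.
Qed.
End Main.

Theorem theorem4 (F : closedFieldType) (Hchar : [pchar F]%R =i pred0)
  (r0 r1 r2 : nat) (h0 : (1 <= r0)%N) (h1 : (1 <= r1)%N) (h2 : (1 <= r2)%N)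
  (h10 : (r1 < r0)%N) (h12 : (r1 < r2)%N) :
  breadth_le F r0 r1 r2 (r1 * (r0 - r1) + r1 * r2).
Proof.
move=> x hx; have [a [ha hb]] := main_bound hx.
apply: leq_trans hb _.
have e : (r1 * (r0 - a) + r2 * a + (r1 - a) * (r2 - r1) = r1 * (r0 - r1) + r1 * r2)%N by nia.
by rewrite -e leq_addr.
Qed.
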